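(* For $t\in(0,1)$ put $c_t:=\frac{4}{4t-t^3}$ and $$K_t(z,P):=\frac{z-\tilde Z(P)}{\bar z-Z(P)}\,e^{-c_t\cosh\mathrm{dist}(z,P)},\qquad z\in\mathbb H,\ P\in\mathcal G_1.$$ Then: (1) $\Phi_t(z,P)=\log K_t(z,P)$ admits a single-valued (continuous) branch for $z\in\mathbb H$, $P\in\mathcal G_1$; (2) for fixed $z\in\mathbb H$ and $\theta\in\mathbb R/2\pi\mathbb Z$, $\max_{P\in\Sigma_{t,\theta}}|K_t(z,P)|$ is attained at $P=h_{-it}(z,\theta)$; (3) for fixed $z_0\in\mathbb H$ and $\theta$, the Hessian matrix with respect to $(x,y)$ of $(x,y)\mapsto\Re\Phi_t(z_0,h_{-it}(x+iy,\theta))$ is non-degenerate at $x+iy=z_0$.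
   Context: $\mathbb H=\{x+iy:y>0\}$ hyperbolic plane; $\mathbb H^{\mathbb C}=\mathbb C\times\mathbb C\ni P=(X(P),Y(P))$, $\mathbb H$ embedded as real points $(x,y)$, $y>0$; $Z(P):=X(P)+iY(P)$, $\tilde Z(P):=X(P)-iY(P)$. For $z=x+iy\in\mathbb H$ and $P$ with $Y(P)\ne0$, $\cosh\mathrm{dist}(z,P):=1+\frac{(x-X(P))^2+(y-Y(P))^2}{2yY(P)}$ (holomorphic in $P$). Horocycles: for $z=x+iy\in\mathbb H$, $\theta\in\mathbb R/2\pi\mathbb Z$, $h_t(z,\theta)$ ($t$ real) is the point at time $t$ of the unique unit-speed right horocycle (image of $t\mapsto -t+i$ under an orientation-preserving isometry) starting at $z$ with velocity $y(\cos\theta\partial_x+\sin\theta\partial_y)$, written as $(\Re,\Im)\in\mathbb R^2$; it extends holomorphically in $t$ to $|\Im t|<1$ with values in $\mathbb C^2$. $\mathcal G_1:=\{h_{-is}(z,\theta): s\in[0,1),z\in\mathbb H,\theta\}$ (an open neighbourhood of $\mathbb H$ in $\mathbb C^2$), and $\Sigma_{t,\theta}:=\{h_{-it}(z,\theta):z\in\mathbb H\}$. *)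

(* Defs.v *)
From Stdlib Require Import Reals.
From Coquelicot Require Import Coquelicot.
Open Scope R_scope.

Definition Cexp (w : C) : C :=
  (exp (Re w) * cos (Im w), exp (Re w) * sin (Im w)).

Definition inH (z : C) : Prop := 0 < Im z.

(** points of H^C = C x C: P = (X(P), Y(P)) *)
Definition XP (P : C * C) : C := fst P.
Definition YP (P : C * C) : C := snd P.
Definition ZP (P : C * C) : C := (XP P + Ci * YP P)%C.
Definition ZtP (P : C * C) : C := (XP P - Ci * YP P)%C.

(** cosh dist(z,P) = 1 + ((x - X)^2 + (y - Y)^2) / (2 y Y), holomorphic in P *)
Definition cosh_dist (z : C) (P : C * C) : C :=
  (RtoC 1 + ((RtoC (Re z) - XP P) * (RtoC (Re z) - XP P)
            + (RtoC (Im z) - YP P) * (RtoC (Im z) - YP P))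
           / (RtoC 2 * RtoC (Im z) * YP P))%C.

(** The rotation k_phi about i (a Mobius map with real
    coefficients) with phi = (theta - pi)/2 sends the unit tangent vector
    -d/dx at i to e^{i theta}; the orientation-preserving isometry
    w |-> x + y k_phi(w) sends i to z = x+iy and -d/dx at i to
    y (cos theta d/dx + sin theta d/dy).  Hence the unit speed right
    horocycle starting at z with that velocity is
       t |-> hw z theta t := x + y k_phi(-t + i)   (t real). *)
Definition kphi (theta : R) (w : C) : C :=
  let phi := (theta - PI) / 2 in
  ((RtoC (cos phi) * w + RtoC (sin phi)) / (RtoC (- sin phi) * w + RtoC (cos phi)))%C.

Definition hw (z : C) (theta : R) (t : C) : C :=
  (RtoC (Re z) + RtoC (Im z) * kphi theta (Ci - t))%C.

(** h_t(z,theta) = (Re hw, Im hw) for real t; its holomorphic extension to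
    complex t with |Im t| < 1 is
      X = (hw t + conj (hw (conj t)))/2,  Y = (hw t - conj (hw (conj t)))/(2i). *)
Definition horo (t : C) (z : C) (theta : R) : C * C :=
  (((hw z theta t + Cconj (hw z theta (Cconj t))) / RtoC 2)%C,
   ((hw z theta t - Cconj (hw z theta (Cconj t))) / (RtoC 2 * Ci))%C).

Definition G1 (P : C * C) : Prop :=
  exists (s : R) (z : C) (theta : R),
    0 <= s < 1 /\ inH z /\ P = horo (RtoC 0 - Ci * RtoC s)%C z theta.

Definition Sigma (t theta : R) (P : C * C) : Prop :=
  exists z : C, inH z /\ P = horo (RtoC 0 - Ci * RtoC t)%C z theta.

Definition c_ (t : R) : R := 4 / (4 * t - t ^ 3).

Definition Kt (t : R) (z : C) (P : C * C) : C :=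
  ((z - ZtP P) / (Cconj z - ZP P) * Cexp (RtoC (- c_ t) * cosh_dist z P))%C.

Definition dx (f : R -> R -> R) (x y : R) : R := Derive (fun u => f u y) x.
Definition dy (f : R -> R -> R) (x y : R) : R := Derive (fun v => f x v) y.

Definition hessian_nondegenerate (f : R -> R -> R) (x0 y0 : R) : Prop :=
  (exists eps : R, 0 < eps /\ forall u v, Rabs (u - x0) < eps -> Rabs (v - y0) < eps ->
     ex_derive (fun a => f a v) u /\ ex_derive (fun b => f u b) v) /\
  ex_derive (fun a => dx f a y0) x0 /\ ex_derive (fun b => dx f x0 b) y0 /\
  ex_derive (fun a => dy f a y0) x0 /\ ex_derive (fun b => dy f x0 b) y0 /\
  Derive (fun a => dx f a y0) x0 * Derive (fun b => dy f x0 b) y0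
  - Derive (fun b => dx f x0 b) y0 * Derive (fun a => dy f a y0) x0 <> 0.

(* Main.v *)
Require Import Defs.
From Stdlib Require Import Reals Lra Psatz.
From Coquelicot Require Import Coquelicot.
Open Scope R_scope.

Ltac bern_tac := repeat match goal with
 | |- 0 <= _ + _ => apply Rplus_le_le_0_compat
 | |- 0 <= _ * _ => apply Rmult_le_pos
 | |- 0 <= _ ^ _ => apply pow_le
 end; lra.
Lemma bern_i1 (tau eta : R) : 0 <= tau <= 1 -> 0 <= eta <= 1 ->
  0 <= (16)*tau^0*eta^0 + (16)*tau^0*eta^1 + (-16)*tau^0*eta^2 + (16)*tau^0*eta^3 + (-12)*tau^1*eta^0 + (-20)*tau^1*eta^1 + (-4)*tau^1*eta^2 + (4)*tau^1*eta^3 + (6)*tau^2*eta^1.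
Proof. intros Ht He.
  replace ((16)*tau^0*eta^0 + (16)*tau^0*eta^1 + (-16)*tau^0*eta^2 + (16)*tau^0*eta^3 + (-12)*tau^1*eta^0 + (-20)*tau^1*eta^1 + (-4)*tau^1*eta^2 + (4)*tau^1*eta^3 + (6)*tau^2*eta^1) with ((16)*(tau^0*(1-tau)^4*(eta^0*(1-eta)^5)) + (96)*(tau^0*(1-tau)^4*(eta^1*(1-eta)^4)) + (208)*(tau^0*(1-tau)^4*(eta^2*(1-eta)^3)) + (224)*(tau^0*(1-tau)^4*(eta^3*(1-eta)^2)) + (128)*(tau^0*(1-tau)^4*(eta^4*(1-eta)^1)) + (32)*(tau^0*(1-tau)^4*(eta^5*(1-eta)^0)) + (52)*(tau^1*(1-tau)^3*(eta^0*(1-eta)^5)) + (304)*(tau^1*(1-tau)^3*(eta^1*(1-eta)^4)) + (628)*(tau^1*(1-tau)^3*(eta^2*(1-eta)^3)) + (648)*(tau^1*(1-tau)^3*(eta^3*(1-eta)^2)) + (368)*(tau^1*(1-tau)^3*(eta^4*(1-eta)^1)) + (96)*(tau^1*(1-tau)^3*(eta^5*(1-eta)^0)) + (60)*(tau^2*(1-tau)^2*(eta^0*(1-eta)^5)) + (342)*(tau^2*(1-tau)^2*(eta^1*(1-eta)^4)) + (660)*(tau^2*(1-tau)^2*(eta^2*(1-eta)^3)) + (636)*(tau^2*(1-tau)^2*(eta^3*(1-eta)^2)) + (360)*(tau^2*(1-tau)^2*(eta^4*(1-eta)^1)) + (102)*(tau^2*(1-tau)^2*(eta^5*(1-eta)^0))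 + (28)*(tau^3*(1-tau)^1*(eta^0*(1-eta)^5)) + (156)*(tau^3*(1-tau)^1*(eta^1*(1-eta)^4)) + (268)*(tau^3*(1-tau)^1*(eta^2*(1-eta)^3)) + (224)*(tau^3*(1-tau)^1*(eta^3*(1-eta)^2)) + (128)*(tau^3*(1-tau)^1*(eta^4*(1-eta)^1)) + (44)*(tau^3*(1-tau)^1*(eta^5*(1-eta)^0)) + (4)*(tau^4*(1-tau)^0*(eta^0*(1-eta)^5)) + (22)*(tau^4*(1-tau)^0*(eta^1*(1-eta)^4)) + (28)*(tau^4*(1-tau)^0*(eta^2*(1-eta)^3)) + (12)*(tau^4*(1-tau)^0*(eta^3*(1-eta)^2)) + (8)*(tau^4*(1-tau)^0*(eta^4*(1-eta)^1)) + (6)*(tau^4*(1-tau)^0*(eta^5*(1-eta)^0))) by ring.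
  bern_tac.
Qed.

Lemma bern_ii1 (tau eta : R) : 0 <= tau <= 1 -> 0 <= eta <= 1 ->
  0 <= (8)*tau^0*eta^0 + (16)*tau^0*eta^1 + (16)*tau^0*eta^3 + (-8)*tau^0*eta^4 + (-14)*tau^1*eta^0 + (-20)*tau^1*eta^1 + (4)*tau^1*eta^3 + (-2)*tau^1*eta^4 + (8)*tau^2*eta^0 + (6)*tau^2*eta^1 + (-2)*tau^3*eta^0.
Proof. intros Ht He.
  replace ((8)*tau^0*eta^0 + (16)*tau^0*eta^1 + (16)*tau^0*eta^3 + (-8)*tau^0*eta^4 + (-14)*tau^1*eta^0 + (-20)*tau^1*eta^1 + (4)*tau^1*eta^3 + (-2)*tau^1*eta^4 + (8)*tau^2*eta^0 + (6)*tau^2*eta^1 + (-2)*tau^3*eta^0) with ((8)*(tau^0*(1-tau)^3*(eta^0*(1-eta)^4)) + (48)*(tau^0*(1-tau)^3*(eta^1*(1-eta)^3)) + (96)*(tau^0*(1-tau)^3*(eta^2*(1-eta)^2)) + (96)*(tau^0*(1-tau)^3*(eta^3*(1-eta)^1)) + (32)*(tau^0*(1-tau)^3*(eta^4*(1-eta)^0)) + (10)*(tau^1*(1-tau)^2*(eta^0*(1-eta)^4)) + (68)*(tau^1*(1-tau)^2*(eta^1*(1-eta)^3)) + (144)*(tau^1*(1-tau)^2*(eta^2*(1-eta)^2)) + (176)*(tau^1*(1-tau)^2*(eta^3*(1-eta)^1)) + (64)*(tau^1*(1-tau)^2*(eta^4*(1-eta)^0)) + (4)*(tau^2*(1-tau)^1*(eta^0*(1-eta)^4))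 + (30)*(tau^2*(1-tau)^1*(eta^1*(1-eta)^3)) + (66)*(tau^2*(1-tau)^1*(eta^2*(1-eta)^2)) + (114)*(tau^2*(1-tau)^1*(eta^3*(1-eta)^1)) + (46)*(tau^2*(1-tau)^1*(eta^4*(1-eta)^0)) + (2)*(tau^3*(1-tau)^0*(eta^1*(1-eta)^3)) + (6)*(tau^3*(1-tau)^0*(eta^2*(1-eta)^2)) + (26)*(tau^3*(1-tau)^0*(eta^3*(1-eta)^1)) + (12)*(tau^3*(1-tau)^0*(eta^4*(1-eta)^0))) by ring.
  bern_tac.
Qed.

Lemma bern_i2 (tau eta : R) : 0 <= tau <= 1 -> 0 <= eta <= 1 ->
  0 <= (24)*tau^0*eta^0 + (80)*tau^0*eta^1 + (-48)*tau^0*eta^2 + (64)*tau^0*eta^3 + (-40)*tau^0*eta^4 + (48)*tau^0*eta^5 + (-22)*tau^1*eta^0 + (-84)*tau^1*eta^1 + (-52)*tau^1*eta^2 + (16)*tau^1*eta^3 + (-6)*tau^1*eta^4 + (-12)*tau^1*eta^5 + (-4)*tau^2*eta^0 + (40)*tau^2*eta^1 + (24)*tau^2*eta^2 + (8)*tau^2*eta^3 + (-12)*tau^2*eta^4 + (2)*tau^3*eta^0 + (-10)*tau^3*eta^1 + (2)*tau^3*eta^2.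
Proof. intros Ht He.
  replace ((24)*tau^0*eta^0 + (80)*tau^0*eta^1 + (-48)*tau^0*eta^2 + (64)*tau^0*eta^3 + (-40)*tau^0*eta^4 + (48)*tau^0*eta^5 + (-22)*tau^1*eta^0 + (-84)*tau^1*eta^1 + (-52)*tau^1*eta^2 + (16)*tau^1*eta^3 + (-6)*tau^1*eta^4 + (-12)*tau^1*eta^5 + (-4)*tau^2*eta^0 + (40)*tau^2*eta^1 + (24)*tau^2*eta^2 + (8)*tau^2*eta^3 + (-12)*tau^2*eta^4 + (2)*tau^3*eta^0 + (-10)*tau^3*eta^1 + (2)*tau^3*eta^2) with ((24)*(tau^0*(1-tau)^3*(eta^0*(1-eta)^5)) + (200)*(tau^0*(1-tau)^3*(eta^1*(1-eta)^4)) + (512)*(tau^0*(1-tau)^3*(eta^2*(1-eta)^3)) + (640)*(tau^0*(1-tau)^3*(eta^3*(1-eta)^2)) + (384)*(tau^0*(1-tau)^3*(eta^4*(1-eta)^1)) + (128)*(tau^0*(1-tau)^3*(eta^5*(1-eta)^0)) + (50)*(tau^1*(1-tau)^2*(eta^0*(1-eta)^5)) + (406)*(tau^1*(1-tau)^2*(eta^1*(1-eta)^4)) + (928)*(tau^1*(1-tau)^2*(eta^2*(1-eta)^3)) + (1056)*(tau^1*(1-tau)^2*(eta^3*(1-eta)^2)) + (576)*(tau^1*(1-tau)^2*(eta^4*(1-eta)^1)) + (224)*(tau^1*(1-tau)^2*(eta^5*(1-eta)^0)) + (24)*(tau^2*(1-tau)^1*(eta^0*(1-eta)^5)) + (232)*(tau^2*(1-tau)^1*(eta^1*(1-eta)^4))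 + (464)*(tau^2*(1-tau)^1*(eta^2*(1-eta)^3)) + (472)*(tau^2*(1-tau)^1*(eta^3*(1-eta)^2)) + (216)*(tau^2*(1-tau)^1*(eta^4*(1-eta)^1)) + (120)*(tau^2*(1-tau)^1*(eta^5*(1-eta)^0)) + (26)*(tau^3*(1-tau)^0*(eta^1*(1-eta)^4)) + (30)*(tau^3*(1-tau)^0*(eta^2*(1-eta)^3)) + (22)*(tau^3*(1-tau)^0*(eta^3*(1-eta)^2)) + (18)*(tau^3*(1-tau)^0*(eta^5*(1-eta)^0))) by ring.
  bern_tac.
Qed.

Lemma bern_ii2 (tau eta : R) : 0 <= tau <= 1 -> 0 <= eta <= 1 ->
  0 <= (8)*tau^0*eta^0 + (32)*tau^0*eta^1 + (24)*tau^0*eta^2 + (64)*tau^0*eta^3 + (-8)*tau^0*eta^4 + (32)*tau^0*eta^5 + (-24)*tau^0*eta^6 + (-26)*tau^1*eta^0 + (-64)*tau^1*eta^1 + (-54)*tau^1*eta^2 + (-22)*tau^1*eta^4 + (6)*tau^1*eta^6 + (30)*tau^2*eta^0 + (46)*tau^2*eta^1 + (20)*tau^2*eta^2 + (-4)*tau^2*eta^3 + (-10)*tau^2*eta^4 + (6)*tau^2*eta^5 + (-14)*tau^3*eta^0 + (-10)*tau^3*eta^1 + (2)*tau^3*eta^2 + (2)*tau^4*eta^0.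
Proof. intros Ht He.
  replace ((8)*tau^0*eta^0 + (32)*tau^0*eta^1 + (24)*tau^0*eta^2 + (64)*tau^0*eta^3 + (-8)*tau^0*eta^4 + (32)*tau^0*eta^5 + (-24)*tau^0*eta^6 + (-26)*tau^1*eta^0 + (-64)*tau^1*eta^1 + (-54)*tau^1*eta^2 + (-22)*tau^1*eta^4 + (6)*tau^1*eta^6 + (30)*tau^2*eta^0 + (46)*tau^2*eta^1 + (20)*tau^2*eta^2 + (-4)*tau^2*eta^3 + (-10)*tau^2*eta^4 + (6)*tau^2*eta^5 + (-14)*tau^3*eta^0 + (-10)*tau^3*eta^1 + (2)*tau^3*eta^2 + (2)*tau^4*eta^0) with ((8)*(tau^0*(1-tau)^4*(eta^0*(1-eta)^6)) + (80)*(tau^0*(1-tau)^4*(eta^1*(1-eta)^5)) + (304)*(tau^0*(1-tau)^4*(eta^2*(1-eta)^4)) + (640)*(tau^0*(1-tau)^4*(eta^3*(1-eta)^3)) + (768)*(tau^0*(1-tau)^4*(eta^4*(1-eta)^2)) + (512)*(tau^0*(1-tau)^4*(eta^5*(1-eta)^1)) + (128)*(tau^0*(1-tau)^4*(eta^6*(1-eta)^0)) + (6)*(tau^1*(1-tau)^3*(eta^0*(1-eta)^6)) + (100)*(tau^1*(1-tau)^3*(eta^1*(1-eta)^5)) + (452)*(tau^1*(1-tau)^3*(eta^2*(1-eta)^4)) + (1184)*(tau^1*(1-tau)^3*(eta^3*(1-eta)^3)) + (1696)*(tau^1*(1-tau)^3*(eta^4*(1-eta)^2)) + (1312)*(tau^1*(1-tau)^3*(eta^5*(1-eta)^1))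 + (352)*(tau^1*(1-tau)^3*(eta^6*(1-eta)^0)) + (46)*(tau^2*(1-tau)^2*(eta^1*(1-eta)^5)) + (232)*(tau^2*(1-tau)^2*(eta^2*(1-eta)^4)) + (848)*(tau^2*(1-tau)^2*(eta^3*(1-eta)^3)) + (1488)*(tau^2*(1-tau)^2*(eta^4*(1-eta)^2)) + (1328)*(tau^2*(1-tau)^2*(eta^5*(1-eta)^1)) + (376)*(tau^2*(1-tau)^2*(eta^6*(1-eta)^0)) + (18)*(tau^3*(1-tau)^1*(eta^1*(1-eta)^5)) + (66)*(tau^3*(1-tau)^1*(eta^2*(1-eta)^4)) + (332)*(tau^3*(1-tau)^1*(eta^3*(1-eta)^3)) + (662)*(tau^3*(1-tau)^1*(eta^4*(1-eta)^2)) + (642)*(tau^3*(1-tau)^1*(eta^5*(1-eta)^1)) + (186)*(tau^3*(1-tau)^1*(eta^6*(1-eta)^0)) + (4)*(tau^4*(1-tau)^0*(eta^1*(1-eta)^5)) + (12)*(tau^4*(1-tau)^0*(eta^2*(1-eta)^4)) + (68)*(tau^4*(1-tau)^0*(eta^3*(1-eta)^3)) + (132)*(tau^4*(1-tau)^0*(eta^4*(1-eta)^2)) + (126)*(tau^4*(1-tau)^0*(eta^5*(1-eta)^1)) + (36)*(tau^4*(1-tau)^0*(eta^6*(1-eta)^0))) by ring.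
  bern_tac.
Qed.
Lemma st_i1 (tau eta : R) : 0 <= tau <= 1 -> 0 <= eta <= 1 -> 0 <= 2*(8+2*tau)*((eta-1)^2)*(1+eta)+(32-16*tau+6*tau^2)*eta-16*tau.
Proof. intros. replace (2*(8+2*tau)*((eta-1)^2)*(1+eta)+(32-16*tau+6*tau^2)*eta-16*tau) with ((16)*tau^0*eta^0 + (16)*tau^0*eta^1 + (-16)*tau^0*eta^2 + (16)*tau^0*eta^3 + (-12)*tau^1*eta^0 + (-20)*tau^1*eta^1 + (-4)*tau^1*eta^2 + (4)*tau^1*eta^3 + (6)*tau^2*eta^1) by ring. apply bern_i1; lra. Qed.
Lemma st_ii1 (tau eta : R) : 0 <= tau <= 1 -> 0 <= eta <= 1 -> 0 <= (8+2*tau)*((eta-1)^2)*(1-eta^2)+(32-16*tau+6*tau^2)*eta-16*tau+2*tau^2*(4-tau).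
Proof. intros. replace ((8+2*tau)*((eta-1)^2)*(1-eta^2)+(32-16*tau+6*tau^2)*eta-16*tau+2*tau^2*(4-tau)) with ((8)*tau^0*eta^0 + (16)*tau^0*eta^1 + (16)*tau^0*eta^3 + (-8)*tau^0*eta^4 + (-14)*tau^1*eta^0 + (-20)*tau^1*eta^1 + (4)*tau^1*eta^3 + (-2)*tau^1*eta^4 + (8)*tau^2*eta^0 + (6)*tau^2*eta^1 + (-2)*tau^3*eta^0) by ring. apply bern_ii1; lra. Qed.
Lemma st_i2 (tau eta : R) : 0 <= tau <= 1 -> 0 <= eta <= 1 -> 0 <= (6*(4-tau)*((eta-1)^2)^2+2*(eta*(64-24*tau-6*tau^2)+2*tau*(4-tau))*((eta-1)^2)+(4-tau)*((32-16*tau-2*tau^2)*eta^2+(10*tau^2-8*tau)*eta-(8*tau+2*tau^2)))+2*(6*(4-tau)*((eta-1)^2)+(eta*(64-24*tau-6*tau^2)+2*tau*(4-tau)))*eta*((eta-1)^2).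
Proof. intros. replace ((6*(4-tau)*((eta-1)^2)^2+2*(eta*(64-24*tau-6*tau^2)+2*tau*(4-tau))*((eta-1)^2)+(4-tau)*((32-16*tau-2*tau^2)*eta^2+(10*tau^2-8*tau)*eta-(8*tau+2*tau^2)))+2*(6*(4-tau)*((eta-1)^2)+(eta*(64-24*tau-6*tau^2)+2*tau*(4-tau)))*eta*((eta-1)^2)) with ((24)*tau^0*eta^0 + (80)*tau^0*eta^1 + (-48)*tau^0*eta^2 + (64)*tau^0*eta^3 + (-40)*tau^0*eta^4 + (48)*tau^0*eta^5 + (-22)*tau^1*eta^0 + (-84)*tau^1*eta^1 + (-52)*tau^1*eta^2 + (16)*tau^1*eta^3 + (-6)*tau^1*eta^4 + (-12)*tau^1*eta^5 + (-4)*tau^2*eta^0 + (40)*tau^2*eta^1 + (24)*tau^2*eta^2 + (8)*tau^2*eta^3 + (-12)*tau^2*eta^4 + (2)*tau^3*eta^0 + (-10)*tau^3*eta^1 + (2)*tau^3*eta^2) by ring. apply bern_i2; lra. Qed.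
Lemma st_ii2 (tau eta : R) : 0 <= tau <= 1 -> 0 <= eta <= 1 -> 0 <= (2*(4-tau)*((eta-1)^2)^2+(eta*(64-24*tau-6*tau^2)+2*tau*(4-tau))*((eta-1)^2)+(4-tau)*((32-16*tau-2*tau^2)*eta^2+(10*tau^2-8*tau)*eta-(8*tau+2*tau^2))+2*(4-tau)^2*tau^2)-(6*(4-tau)*((eta-1)^2)+(eta*(64-24*tau-6*tau^2)+2*tau*(4-tau)))*eta^2*((eta-1)^2).
Proof. intros. replace ((2*(4-tau)*((eta-1)^2)^2+(eta*(64-24*tau-6*tau^2)+2*tau*(4-tau))*((eta-1)^2)+(4-tau)*((32-16*tau-2*tau^2)*eta^2+(10*tau^2-8*tau)*eta-(8*tau+2*tau^2))+2*(4-tau)^2*tau^2)-(6*(4-tau)*((eta-1)^2)+(eta*(64-24*tau-6*tau^2)+2*tau*(4-tau)))*eta^2*((eta-1)^2)) with ((8)*tau^0*eta^0 + (32)*tau^0*eta^1 + (24)*tau^0*eta^2 + (64)*tau^0*eta^3 + (-8)*tau^0*eta^4 + (32)*tau^0*eta^5 + (-24)*tau^0*eta^6 + (-26)*tau^1*eta^0 + (-64)*tau^1*eta^1 + (-54)*tau^1*eta^2 + (-22)*tau^1*eta^4 + (6)*tau^1*eta^6 + (30)*tau^2*eta^0 + (46)*tau^2*eta^1 + (20)*tau^2*eta^2 + (-4)*tau^2*eta^3 + (-10)*tau^2*eta^4 + (6)*tau^2*eta^5 + (-14)*tau^3*eta^0 + (-10)*tau^3*eta^1 + (2)*tau^3*eta^2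 + (2)*tau^4*eta^0) by ring. apply bern_ii2; lra. Qed.

Lemma p1_nonneg (tau eta X : R) : 0 < tau < 1 -> 0 < eta -> 0 <= X ->
  0 <= (8+2*tau)*(X+((eta-1)^2))^2 + ((32-16*tau+6*tau^2)*eta - 16*tau)*(X+((eta-1)^2)) + 2*tau^2*(4-tau)*((eta-1)^2).
Proof. intros Ht He HX.
  assert (Hm : 0 <= ((eta-1)^2)) by (apply pow2_ge_0).
  destruct (Rle_dec eta 1) as [E|E].
  - replace ((8+2*tau)*(X+((eta-1)^2))^2 + ((32-16*tau+6*tau^2)*eta - 16*tau)*(X+((eta-1)^2)) + 2*tau^2*(4-tau)*((eta-1)^2))
      with ((8+2*tau)*(X-eta*((eta-1)^2))^2 + (2*(8+2*tau)*((eta-1)^2)*(1+eta)+(32-16*tau+6*tau^2)*eta-16*tau)*X + ((eta-1)^2)*((8+2*tau)*((eta-1)^2)*(1-eta^2)+(32-16*tau+6*tau^2)*eta-16*tau+2*tau^2*(4-tau))) by ring.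
    pose proof (st_i1 tau eta ltac:(lra) ltac:(lra)). pose proof (st_ii1 tau eta ltac:(lra) ltac:(lra)).
    assert (0 <= (X-eta*((eta-1)^2))^2) by apply pow2_ge_0.
    repeat apply Rplus_le_le_0_compat; apply Rmult_le_pos; lra.
  - assert (HK : 0 <= (32-16*tau+6*tau^2)*eta - 16*tau) by nra.
    replace ((8+2*tau)*(X+((eta-1)^2))^2 + ((32-16*tau+6*tau^2)*eta - 16*tau)*(X+((eta-1)^2)) + 2*tau^2*(4-tau)*((eta-1)^2))
      with ((8+2*tau)*X^2 + (2*(8+2*tau)*((eta-1)^2) + ((32-16*tau+6*tau^2)*eta - 16*tau))*X + ((eta-1)^2)*((8+2*tau)*((eta-1)^2)+((32-16*tau+6*tau^2)*eta - 16*tau)+2*tau^2*(4-tau))) by ring.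
    assert (0 <= X^2) by apply pow2_ge_0.
    assert (0 <= tau^2) by apply pow2_ge_0.
    repeat apply Rplus_le_le_0_compat; repeat apply Rmult_le_pos; try lra; nra.
Qed.

Lemma p2_nonneg (tau eta X : R) : 0 < tau < 1 -> 0 < eta -> 0 <= X ->
  0 <= 2*(4-tau)*(X+((eta-1)^2))^3 + (eta*(64-24*tau-6*tau^2)+2*tau*(4-tau))*(X+((eta-1)^2))^2 + (4-tau)*((32-16*tau-2*tau^2)*eta^2+(10*tau^2-8*tau)*eta-(8*tau+2*tau^2))*(X+((eta-1)^2)) + 2*(4-tau)^2*tau^2*((eta-1)^2).
Proof. intros Ht He HX.
  assert (Hm : 0 <= ((eta-1)^2)) by (apply pow2_ge_0).
  assert (0 <= 64-24*tau-6*tau^2) by nra.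
  assert (HB2 : 0 <= (eta*(64-24*tau-6*tau^2)+2*tau*(4-tau))) by (apply Rplus_le_le_0_compat; apply Rmult_le_pos; lra).
  destruct (Rle_dec eta 1) as [E|E].
  - replace (2*(4-tau)*(X+((eta-1)^2))^3 + (eta*(64-24*tau-6*tau^2)+2*tau*(4-tau))*(X+((eta-1)^2))^2 + (4-tau)*((32-16*tau-2*tau^2)*eta^2+(10*tau^2-8*tau)*eta-(8*tau+2*tau^2))*(X+((eta-1)^2)) + 2*(4-tau)^2*tau^2*((eta-1)^2))
      with (2*(4-tau)*X^3 + ((6*(4-tau)*((eta-1)^2)+(eta*(64-24*tau-6*tau^2)+2*tau*(4-tau)))*(X-eta*((eta-1)^2))^2 + ((6*(4-tau)*((eta-1)^2)^2+2*(eta*(64-24*tau-6*tau^2)+2*tau*(4-tau))*((eta-1)^2)+(4-tau)*((32-16*tau-2*tau^2)*eta^2+(10*tau^2-8*tau)*eta-(8*tau+2*tau^2)))+2*(6*(4-tau)*((eta-1)^2)+(eta*(64-24*tau-6*tau^2)+2*tau*(4-tau)))*eta*((eta-1)^2))*X + ((eta-1)^2)*((2*(4-tau)*((eta-1)^2)^2+(eta*(64-24*tau-6*tau^2)+2*tau*(4-tau))*((eta-1)^2)+(4-tau)*((32-16*tau-2*tau^2)*eta^2+(10*tau^2-8*tau)*eta-(8*tau+2*tau^2))+2*(4-tau)^2*tau^2)-(6*(4-tau)*((eta-1)^2)+(eta*(64-24*tau-6*tau^2)+2*tau*(4-tau)))*eta^2*((eta-1)^2)))) by ring.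
    pose proof (st_i2 tau eta ltac:(lra) ltac:(lra)). pose proof (st_ii2 tau eta ltac:(lra) ltac:(lra)).
    assert (0 <= (X-eta*((eta-1)^2))^2) by apply pow2_ge_0.
    assert (0 <= X^3) by (apply pow_le; lra).
    assert (0 <= (6*(4-tau)*((eta-1)^2)+(eta*(64-24*tau-6*tau^2)+2*tau*(4-tau)))) by nra.
    repeat apply Rplus_le_le_0_compat; apply Rmult_le_pos; lra.
  - assert (HL : 0 <= ((32-16*tau-2*tau^2)*eta^2+(10*tau^2-8*tau)*eta-(8*tau+2*tau^2))).
    { set (e := eta - 1). replace eta with (1+e) by (unfold e; ring).
       assert (0 <= e) by (unfold e; lra). nra. }
    assert (0 <= (X+((eta-1)^2))) by lra.
    assert (0 <= (X+((eta-1)^2))^2) by apply pow2_ge_0.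
    assert (0 <= (X+((eta-1)^2))^3) by (apply pow_le; lra).
    assert (0 <= tau^2) by apply pow2_ge_0.
    repeat apply Rplus_le_le_0_compat; repeat apply Rmult_le_pos; lra.
Qed.

Lemma ln_bound1 y : 0 < y <= 1 -> ln y <= 2*(y-1)/(y+1).
Proof.
  intros Hy. destruct (Req_dec y 1) as [E|E].
  { subst. rewrite ln_1. lra. }
  set (phi := fun x => 2*(x-1)/(x+1) - ln x).
  assert (HD : forall c, y <= c <= 1 -> derivable_pt_lim phi c (4/(c+1)^2 - /c)).
  { intros c Hc. apply is_derive_Reals. unfold phi. auto_derive.
    - lra.
    - field. lra. }
  destruct (MVT_cor2 phi _ y 1 ltac:(lra) HD) as [c [Hc1 Hc2]].
  assert (Hneg : 4/(c+1)^2 - /c <= 0).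
  { replace (4/(c+1)^2 - /c) with (-((c-1)^2/(c*(c+1)^2))) by (field; lra).
    assert (0 < c*(c+1)^2) by (apply Rmult_lt_0_compat; [lra| apply pow_lt; lra]).
    assert (0 <= (c-1)^2) by apply pow2_ge_0.
    assert (0 <= (c-1)^2/(c*(c+1)^2)) by (apply Rdiv_le_0_compat; lra). lra. }
  unfold phi in Hc1. rewrite ln_1 in Hc1.
  replace (2*(1-1)/(1+1) - 0) with 0 in Hc1 by field.
  assert ((4/(c+1)^2 - /c) * (1 - y) <= 0) by nra. lra.
Qed.

Lemma ln_bound2 y : 1 <= y -> ln y <= (y - /y)/2.
Proof.
  intros Hy. destruct (Req_dec y 1) as [E|E].
  { subst. rewrite ln_1. field_simplify. lra. }
  set (phi := fun x => (x - /x)/2 - ln x).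
  assert (HD : forall c, 1 <= c <= y -> derivable_pt_lim phi c ((1 + /c^2)/2 - /c)).
  { intros c Hc. apply is_derive_Reals. unfold phi. auto_derive.
    - lra.
    - field. lra. }
  destruct (MVT_cor2 phi _ 1 y ltac:(lra) HD) as [c [Hc1 Hc2]].
  assert (Hpos : 0 <= (1 + /c^2)/2 - /c).
  { replace ((1 + /c^2)/2 - /c) with ((c-1)^2/(2*c^2)) by (field; lra).
    apply Rdiv_le_0_compat. apply pow2_ge_0. assert (0 < c^2) by (apply pow_lt; lra). lra. }
  unfold phi in Hc1. rewrite ln_1 in Hc1.
  replace ((1 - /1)/2 - 0) with 0 in Hc1 by field.
  assert (0 <= ((1 + /c^2)/2 - /c) * (y - 1)) by nra. lra.
Qed.

Definition fz (t xi eta : R) : R :=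
  (ln (xi^2 + (eta+1-t)^2) - ln (xi^2 + (eta+1+t)^2))/2
  - c_ t * (1 + (xi^2 + (eta-1)^2 - t^2)/(2*eta)).

Lemma fz_max t xi eta : 0 < t < 1 -> 0 < eta -> fz t xi eta <= fz t 0 1.
Proof.
  intros Ht He. unfold fz.
  set (X := xi^2).
  assert (HX : 0 <= X) by apply pow2_ge_0.
  set (N := X + (eta+1-t)^2). set (Dd := X + (eta+1+t)^2).
  assert (HN : 0 < N) by (unfold N; assert (0 < (eta+1-t)^2) by (apply pow_lt; lra); lra).
  assert (HDd : 0 < Dd) by (unfold Dd; assert (0 < (eta+1+t)^2) by (apply pow_lt; lra); lra).
  replace (0^2 + (1+1-t)^2) with ((2-t)^2) by ring.
  replace (0^2 + (1+1+t)^2) with ((2+t)^2) by ring.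
  assert (Hp : 0 < (2-t)^2) by (apply pow_lt; lra).
  assert (Hq : 0 < (2+t)^2) by (apply pow_lt; lra).
  set (n := N*(2+t)^2). set (d := Dd*(2-t)^2).
  assert (Hn : 0 < n) by (unfold n; apply Rmult_lt_0_compat; lra).
  assert (Hd : 0 < d) by (unfold d; apply Rmult_lt_0_compat; lra).
  assert (Hln : (ln N - ln Dd) - (ln ((2-t)^2) - ln ((2+t)^2)) = ln (n/d)).
  { rewrite ln_div by lra. unfold n, d. rewrite !ln_mult by lra. ring. }
  set (E := X + (eta-1)^2 + t^2*(eta-1)).
  set (P := 4 - t^2).
  assert (HP : 0 < P) by (unfold P; nra).
  assert (H4 : 0 < 4 - t^2) by nra.
  assert (H4t : 0 < 4*t - t^3) by (replace (4*t - t^3) with (t*(4-t^2)) by ring; apply Rmult_lt_0_compat; lra).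
  assert (Hc : c_ t * (1 + (X + (eta-1)^2 - t^2)/(2*eta)) - c_ t * (1 + (0^2 + (1-1)^2 - t^2)/(2*1))
               = 2*E/(eta*t*P)).
  { unfold c_, E, P. field. repeat split; lra. }
  assert (Hgoal : ln (n/d) / 2 <= 2*E/(eta*t*P)).
  2:{ lra. }
  set (tau := t^2).
  assert (Htau : 0 < tau < 1) by (unfold tau; nra).
  destruct (Rle_dec (n/d) 1) as [Hy|Hy].
  - assert (Hy0 : 0 < n/d) by (apply Rdiv_lt_0_compat; lra).
    pose proof (ln_bound1 (n/d) (conj Hy0 Hy)) as Hb.
    assert (Hk : 2*E/(eta*t*P) - (n/d-1)/(n/d+1) =
      2*((8+2*tau)*(X+((eta-1)^2))^2 + ((32-16*tau+6*tau^2)*eta - 16*tau)*(X+((eta-1)^2)) + 2*tau^2*(4-tau)*((eta-1)^2))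
      / (eta*t*P*(n+d))).
    { unfold E, P, tau, n, d, N, Dd. field. repeat split; try lra.
      all: fold N Dd; fold n d; lra. }
    pose proof (p1_nonneg tau eta X Htau He HX) as Hp1.
    assert (0 <= 2*((8+2*tau)*(X+((eta-1)^2))^2 + ((32-16*tau+6*tau^2)*eta - 16*tau)*(X+((eta-1)^2)) + 2*tau^2*(4-tau)*((eta-1)^2))
      / (eta*t*P*(n+d))).
    { apply Rdiv_le_0_compat. lra. repeat apply Rmult_lt_0_compat; lra. }
    lra.
  - assert (Hy1 : 1 <= n/d) by lra.
    pose proof (ln_bound2 (n/d) Hy1) as Hb.
    set (p2 := 2*(4-tau)*(X+((eta-1)^2))^3 + (eta*(64-24*tau-6*tau^2)+2*tau*(4-tau))*(X+((eta-1)^2))^2 + (4-tau)*((32-16*tau-2*tau^2)*eta^2+(10*tau^2-8*tau)*eta-(8*tau+2*tau^2))*(X+((eta-1)^2)) + 2*(4-tau)^2*tau^2*((eta-1)^2)).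
    assert (Hk : 2*E/(eta*t*P) - (n/d - /(n/d))/4 = p2 / (eta*t*n*d)).
    { unfold p2, E, P, tau, n, d, N, Dd. field. repeat split; try lra.
      all: fold N Dd; fold n d; lra. }
    pose proof (p2_nonneg tau eta X Htau He HX) as Hp2. fold p2 in Hp2.
    assert (0 <= p2 / (eta*t*n*d)).
    { apply Rdiv_le_0_compat. lra. repeat apply Rmult_lt_0_compat; lra. }
    lra.
Qed.

Section Cont.
Context {T : UniformSpace}.

Lemma cR_plus (f g : T -> R) x : continuous f x -> continuous g x -> continuous (fun y => f y + g y) x.
Proof. intros Hf Hg. exact (continuous_plus f g x Hf Hg). Qed.
Lemma cR_mult (f g : T -> R) x : continuous f x -> continuous g x -> continuous (fun y => f y * g y) x.
Proof. intros Hf Hg. exact (@continuous_mult T R_AbsRing f g x Hf Hg). Qed.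
Lemma cR_const (c : R) x : continuous (fun _ : T => c) x.
Proof. apply continuous_const. Qed.
Lemma cR_opp (f : T -> R) x : continuous f x -> continuous (fun y => - f y) x.
Proof. intros Hf. exact (continuous_opp f x Hf). Qed.
Lemma cR_minus (f g : T -> R) x : continuous f x -> continuous g x -> continuous (fun y => f y - g y) x.
Proof. intros Hf Hg. unfold Rminus. apply cR_plus; auto. apply cR_opp; auto. Qed.
Lemma cR_inv (f : T -> R) x : continuous f x -> f x <> 0 -> continuous (fun y => / f y) x.
Proof. intros Hf H. apply (continuous_comp f Rinv). exact Hf. apply continuous_Rinv. exact H. Qed.
Lemma cR_div (f g : T -> R) x : continuous f x -> continuous g x -> g x <> 0 -> continuous (fun y => f y / g y) x.
Proof. intros Hf Hg H. unfold Rdiv. apply cR_mult; auto. apply cR_inv; auto. Qed.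
Lemma cR_ln (f : T -> R) x : continuous f x -> 0 < f x -> continuous (fun y => ln (f y)) x.
Proof. intros Hf H. apply (continuous_comp f ln). exact Hf. apply continuous_ln. exact H. Qed.
Lemma cR_atan (f : T -> R) x : continuous f x -> continuous (fun y => atan (f y)) x.
Proof. intros Hf. apply (continuous_comp f atan). exact Hf. apply continuous_atan. Qed.
Lemma cR_pow2 (f : T -> R) x : continuous f x -> continuous (fun y => f y ^ 2) x.
Proof. intros Hf. simpl. apply cR_mult; auto. apply cR_mult; auto. apply cR_const. Qed.

Definition ccont (f : T -> C) (x : T) :=
  continuous (fun y => fst (f y)) x /\ continuous (fun y => snd (f y)) x.

Lemma ccont_plus f g x : ccont f x -> ccont g x -> ccont (fun y => f y + g y)%C x.
Proof. intros [H1 H2] [H3 H4]. split; simpl; apply cR_plus; auto. Qed.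
Lemma ccont_opp f x : ccont f x -> ccont (fun y => - f y)%C x.
Proof. intros [H1 H2]. split; simpl; apply cR_opp; auto. Qed.
Lemma ccont_minus f g x : ccont f x -> ccont g x -> ccont (fun y => f y - g y)%C x.
Proof. intros Hf Hg. apply ccont_plus; auto. apply ccont_opp; auto. Qed.
Lemma ccont_mult f g x : ccont f x -> ccont g x -> ccont (fun y => f y * g y)%C x.
Proof. intros [H1 H2] [H3 H4]. split; simpl.
  apply cR_minus; apply cR_mult; auto. apply cR_plus; apply cR_mult; auto. Qed.
Lemma ccont_const (c : C) x : ccont (fun _ => c) x.
Proof. split; apply cR_const. Qed.
Lemma ccont_conj f x : ccont f x -> ccont (fun y => Cconj (f y)) x.
Proof. intros [H1 H2]. split; simpl; auto. apply cR_opp; auto. Qed.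
Lemma ccont_inv f x : ccont f x -> f x <> 0%C -> ccont (fun y => Cinv (f y)) x.
Proof. intros [H1 H2] Hn.
  assert (Hn' : fst (f x) ^ 2 + snd (f x) ^ 2 <> 0).
  { intro E. apply Hn. destruct (f x) as [a b]. simpl in E.
    assert (a = 0) by nra. assert (b = 0) by nra. subst. reflexivity. }
  assert (Hc : continuous (fun y => fst (f y) ^ 2 + snd (f y) ^ 2) x).
  { apply cR_plus; apply cR_pow2; auto. }
  split; simpl.
  - apply cR_div; auto.
  - apply cR_div; auto. apply cR_opp; auto.
Qed.
Lemma ccont_div f g x : ccont f x -> ccont g x -> g x <> 0%C -> ccont (fun y => f y / g y)%C x.
Proof. intros Hf Hg H. unfold Cdiv. apply ccont_mult; auto. apply ccont_inv; auto. Qed.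

Lemma ccont_cont (f : T -> C) x : ccont f x -> continuous f x.
Proof. intros [H1 H2].
  apply (continuous_ext (fun y => (fst (f y), snd (f y)))).
  { intro y. destruct (f y); reflexivity. }
  apply (continuous_comp_2 (fun y => fst (f y)) (fun y => snd (f y)) (fun a b => (a, b) : C)); auto.
  apply (continuous_ext (fun p => p)). { intros [a b]; reflexivity. }
  apply continuous_id.
Qed.
End Cont.

Lemma cont_fstC {T : UniformSpace} (f : T -> C) x : continuous f x -> continuous (fun y => fst (f y)) x.
Proof. intros H. apply (continuous_comp f fst). exact H. destruct (f x) as [a b]. exact (continuous_fst a b). Qed.

Lemma Cexp_log (a b w : C) : 0 < snd a -> snd b < 0 ->
  Cexp ((ln (fst a ^ 2 + snd a ^ 2) - ln (fst b ^ 2 + snd b ^ 2)) / 2 + fst w,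
        PI - atan (fst a / snd a) + atan (fst b / snd b) + snd w) = (a / b * Cexp w)%C.
Proof.
  destruct a as [a1 a2], b as [b1 b2], w as [w1 w2]. cbn [fst snd]. intros Ha Hb.
  set (qa := a1^2 + a2^2). set (qb := b1^2 + b2^2).
  assert (Hqa : 0 < qa) by (unfold qa; nra).
  assert (Hqb : 0 < qb) by (unfold qb; nra).
  set (sa := sqrt qa). set (sb := sqrt qb).
  assert (Hsa : 0 < sa) by (apply sqrt_lt_R0; lra).
  assert (Hsb : 0 < sb) by (apply sqrt_lt_R0; lra).
  assert (Hsb2 : sb * sb = b1^2 + b2^2) by (unfold sb; rewrite sqrt_sqrt; [reflexivity | lra]).
  assert (Hexp : exp ((ln qa - ln qb) / 2 + w1) = sa / sb * exp w1).
  { unfold sa, sb. rewrite <- !Rpower_sqrt by lra. unfold Rpower.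
    replace ((ln qa - ln qb) / 2 + w1) with (/2 * ln qa + (- (/2 * ln qb) + w1)) by field.
    rewrite !exp_plus, exp_Ropp. field. apply Rgt_not_eq, exp_pos. }
  assert (Ea : sqrt (1 + (a1/a2)²) = sa / a2).
  { replace (1 + (a1/a2)²) with (qa / a2²) by (unfold qa, Rsqr; field; lra).
    rewrite sqrt_div_alt by (unfold Rsqr; nra). rewrite sqrt_Rsqr by lra. reflexivity. }
  assert (Eb : sqrt (1 + (b1/b2)²) = sb / (- b2)).
  { replace (1 + (b1/b2)²) with (qb / b2²) by (unfold qb, Rsqr; field; lra).
    rewrite sqrt_div_alt by (unfold Rsqr; nra). rewrite sqrt_Rsqr_abs, Rabs_left by lra. reflexivity. }
  unfold Cexp, Re, Im. cbn [fst snd]. rewrite Hexp.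
  repeat rewrite ?cos_plus, ?sin_plus, ?cos_minus, ?sin_minus. rewrite ?cos_PI, ?sin_PI.
  rewrite !sin_atan, !cos_atan, Ea, Eb.
  apply injective_projections; simpl; replace (b1*(b1*1) + b2*(b2*1)) with (sb*sb) by (rewrite Hsb2; ring); field; repeat split; lra.
Qed.

Definition Phi (t : R) (z : C) (P : C * C) : C :=
  let a := (z - ZtP P)%C in let b := (Cconj z - ZP P)%C in
  let w := (RtoC (- c_ t) * cosh_dist z P)%C in
  ((ln (fst a ^ 2 + snd a ^ 2) - ln (fst b ^ 2 + snd b ^ 2)) / 2 + fst w,
   PI - atan (fst a / snd a) + atan (fst b / snd b) + snd w).

Lemma Phi_exp t z P : 0 < snd (z - ZtP P)%C -> snd (Cconj z - ZP P)%C < 0 ->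
  Cexp (Phi t z P) = Kt t z P.
Proof. intros Ha Hb. unfold Phi, Kt. apply Cexp_log; auto. Qed.

Lemma Ci_minus_t (s : R) : (Ci - (RtoC 0 - Ci * RtoC s))%C = (0, 1 + s).
Proof. apply injective_projections; simpl; ring. Qed.
Lemma Ci_minus_conj_t (s : R) : (Ci - Cconj (RtoC 0 - Ci * RtoC s))%C = (0, 1 - s).
Proof. apply injective_projections; simpl; ring. Qed.

Lemma kphi_iT (th T : R) :
  let Cc := cos ((th - PI) / 2) in let Ss := sin ((th - PI) / 2) in
  Cc*Cc + Ss*Ss*(T*T) <> 0 ->
  kphi th (0, T) = (Ss*Cc*(1-T*T)/(Cc*Cc+Ss*Ss*(T*T)), T*(Cc*Cc+Ss*Ss)/(Cc*Cc+Ss*Ss*(T*T))).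
Proof. intros Cc Ss H. unfold kphi. fold Cc Ss.
  apply injective_projections; simpl; field; auto. Qed.

Lemma CS1 th : let Cc := cos ((th - PI) / 2) in let Ss := sin ((th - PI) / 2) in Cc*Cc + Ss*Ss = 1.
Proof. intros. pose proof (sin2_cos2 ((th - PI) / 2)) as H. unfold Rsqr in H. unfold Cc, Ss. lra. Qed.

Lemma Dpos th T : 0 < T -> let Cc := cos ((th - PI) / 2) in let Ss := sin ((th - PI) / 2) in
  0 < Cc*Cc + Ss*Ss*(T*T).
Proof. intros HT Cc Ss. pose proof (CS1 th) as H. fold Cc Ss in H.
  destruct (Rle_dec 1 T).
  - assert (0 <= Ss*Ss*(T*T-1)) by (apply Rmult_le_pos; nra). nra.
  - assert (0 <= Cc*Cc*(1-T*T)) by (apply Rmult_le_pos; nra).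
    assert (0 < T*T) by nra. nra.
Qed.

Definition hA1 th T := let Cc := cos ((th - PI) / 2) in let Ss := sin ((th - PI) / 2) in
  Ss*Cc*(1-T*T)/(Cc*Cc+Ss*Ss*(T*T)).
Definition hA2 th T := let Cc := cos ((th - PI) / 2) in let Ss := sin ((th - PI) / 2) in
  T*(Cc*Cc+Ss*Ss)/(Cc*Cc+Ss*Ss*(T*T)).

Lemma hA2_pos th T : 0 < T -> 0 < hA2 th T.
Proof. intros HT. unfold hA2. pose proof (CS1 th) as H. pose proof (Dpos th T HT) as H2.
  cbv zeta in *. rewrite H. apply Rdiv_lt_0_compat; lra. Qed.

Lemma horo_form (t' w : C) th : horo t' w th =
  let A := kphi th (Ci - t')%C in let B := kphi th (Ci - Cconj t')%C in
  (((fst w + snd w * fst A + (fst w + snd w * fst B))/2, (snd w * snd A - snd w * snd B)/2),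
   ((snd w * snd A + snd w * snd B)/2, -(snd w * fst A - snd w * fst B)/2)).
Proof. unfold horo, hw, Re, Im. cbv zeta.
  destruct (kphi th (Ci - t')%C) as [a1 a2]. destruct (kphi th (Ci - Cconj t')%C) as [b1 b2].
  destruct w as [u v]. simpl.
  apply injective_projections; apply injective_projections; simpl; field.
Qed.

Lemma horo_s (s : R) (w : C) th : 0 <= s < 1 ->
  horo (RtoC 0 - Ci * RtoC s)%C w th =
  (((fst w + snd w * hA1 th (1+s) + (fst w + snd w * hA1 th (1-s)))/2,
    (snd w * hA2 th (1+s) - snd w * hA2 th (1-s))/2),
   ((snd w * hA2 th (1+s) + snd w * hA2 th (1-s))/2,
    -(snd w * hA1 th (1+s) - snd w * hA1 th (1-s))/2)).
Proof. intros Hs. rewrite horo_form. cbv zeta. rewrite Ci_minus_t, Ci_minus_conj_t.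
  rewrite !kphi_iT.
  - reflexivity.
  - apply Rgt_not_eq, Dpos; lra.
  - apply Rgt_not_eq, Dpos; lra.
Qed.

Lemma signs s (w z : C) th : 0 <= s < 1 -> 0 < snd z -> 0 < snd w ->
  let P := horo (RtoC 0 - Ci * RtoC s)%C w th in
  0 < snd (z - ZtP P)%C /\ snd (Cconj z - ZP P)%C < 0 /\ 0 < fst (YP P).
Proof. intros Hs Hz Hw P. unfold P. rewrite horo_s by auto. unfold ZtP, ZP, XP, YP. simpl.
  pose proof (hA2_pos th (1+s) ltac:(lra)). pose proof (hA2_pos th (1-s) ltac:(lra)).
  assert (0 < snd w * hA2 th (1+s)) by (apply Rmult_lt_0_compat; lra).
  assert (0 < snd w * hA2 th (1-s)) by (apply Rmult_lt_0_compat; lra).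
  repeat split; lra.
Qed.

Section Q.
Notation TT := (prod_UniformSpace C_UniformSpace (prod_UniformSpace C_UniformSpace C_UniformSpace)).
Lemma k_zr (q0 : TT) : continuous (fun q : TT => fst (fst q)) q0.
Proof. destruct q0 as [[a b] P]. apply (continuous_comp (fun q : TT => fst q) (fun c : C => fst c)).
  apply continuous_fst. apply (continuous_fst (U:=R_UniformSpace) (V:=R_UniformSpace)). Qed.
Lemma k_zi (q0 : TT) : continuous (fun q : TT => snd (fst q)) q0.
Proof. destruct q0 as [[a b] P]. apply (continuous_comp (fun q : TT => fst q) (fun c : C => snd c)).
  apply continuous_fst. apply (continuous_snd (U:=R_UniformSpace) (V:=R_UniformSpace)). Qed.
Lemma k_P (q0 : TT) : continuous (fun q : TT => snd q) q0.
Proof. destruct q0 as [a P]. apply continuous_snd. Qed.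
Lemma k_X (q0 : TT) : continuous (fun q : TT => fst (snd q)) q0.
Proof. destruct q0 as [a [X Y]]. apply (continuous_comp (fun q : TT => snd q) (fun c : C*C => fst c)).
  apply continuous_snd. apply (continuous_fst (U:=C_UniformSpace) (V:=C_UniformSpace)). Qed.
Lemma k_Y (q0 : TT) : continuous (fun q : TT => snd (snd q)) q0.
Proof. destruct q0 as [a [X Y]]. apply (continuous_comp (fun q : TT => snd q) (fun c : C*C => snd c)).
  apply continuous_snd. apply (continuous_snd (U:=C_UniformSpace) (V:=C_UniformSpace)). Qed.
Lemma k_X1 (q0 : TT) : continuous (fun q : TT => fst (fst (snd q))) q0.
Proof. apply (continuous_comp (fun q : TT => fst (snd q)) (fun c : C => fst c)). apply k_X.
  destruct (fst (snd q0)). apply (continuous_fst (U:=R_UniformSpace) (V:=R_UniformSpace)). Qed.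
Lemma k_X2 (q0 : TT) : continuous (fun q : TT => snd (fst (snd q))) q0.
Proof. apply (continuous_comp (fun q : TT => fst (snd q)) (fun c : C => snd c)). apply k_X.
  destruct (fst (snd q0)). apply (continuous_snd (U:=R_UniformSpace) (V:=R_UniformSpace)). Qed.
Lemma k_Y1 (q0 : TT) : continuous (fun q : TT => fst (snd (snd q))) q0.
Proof. apply (continuous_comp (fun q : TT => snd (snd q)) (fun c : C => fst c)). apply k_Y.
  destruct (snd (snd q0)). apply (continuous_fst (U:=R_UniformSpace) (V:=R_UniformSpace)). Qed.
Lemma k_Y2 (q0 : TT) : continuous (fun q : TT => snd (snd (snd q))) q0.
Proof. apply (continuous_comp (fun q : TT => snd (snd q)) (fun c : C => snd c)). apply k_Y.
  destruct (snd (snd q0)). apply (continuous_snd (U:=R_UniformSpace) (V:=R_UniformSpace)). Qed.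

Lemma cc_z q0 : ccont (fun q : TT => fst q) q0.
Proof. split; [apply k_zr | apply k_zi]. Qed.
Lemma cc_X q0 : ccont (fun q : TT => XP (snd q)) q0.
Proof. split; [apply k_X1 | apply k_X2]. Qed.
Lemma cc_Y q0 : ccont (fun q : TT => YP (snd q)) q0.
Proof. split; [apply k_Y1 | apply k_Y2]. Qed.
Lemma cc_Rez q0 : ccont (fun q : TT => RtoC (Re (fst q))) q0.
Proof. split; simpl. apply k_zr. apply cR_const. Qed.
Lemma cc_Imz q0 : ccont (fun q : TT => RtoC (Im (fst q))) q0.
Proof. split; simpl. apply k_zi. apply cR_const. Qed.

Ltac cct := repeat match goal with
  | |- ccont (fun q => (@?f q + @?g q)%C) _ => apply (ccont_plus f g)
  | |- ccont (fun q => (@?f q - @?g q)%C) _ => apply (ccont_minus f g)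
  | |- ccont (fun q => (@?f q * @?g q)%C) _ => apply (ccont_mult f g)
  | |- ccont (fun q => Cconj (@?f q)) _ => apply (ccont_conj f)
  | |- ccont (fun q => fst q) _ => apply cc_z
  | |- ccont (fun q => XP (snd q)) _ => apply cc_X
  | |- ccont (fun q => YP (snd q)) _ => apply cc_Y
  | |- ccont (fun q => RtoC (Re (fst q))) _ => apply cc_Rez
  | |- ccont (fun q => RtoC (Im (fst q))) _ => apply cc_Imz
  | |- ccont (fun _ => ?c) _ => apply (ccont_const c)
  end.

Lemma cc_cosh q0 : Im (fst q0) <> 0 -> fst (YP (snd q0)) <> 0 ->
  ccont (fun q : TT => cosh_dist (fst q) (snd q)) q0.
Proof. intros H1 H2. unfold cosh_dist. cct. apply (ccont_div (fun q : TT => _) (fun q : TT => _)); cct.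
  intro E. apply (f_equal fst) in E. simpl in E. apply H2.
  assert (Im (fst q0) * fst (YP (snd q0)) = 0) by nra.
  apply Rmult_integral in H. destruct H; [contradiction | auto]. Qed.

Lemma Phi_cont t q0 : 0 < snd (fst q0 - ZtP (snd q0))%C -> snd (Cconj (fst q0) - ZP (snd q0))%C < 0 ->
  Im (fst q0) <> 0 -> fst (YP (snd q0)) <> 0 ->
  continuous (fun q : TT => Phi t (fst q) (snd q)) q0.
Proof. intros Ha Hb H1 H2. apply ccont_cont. unfold Phi.
  assert (Ca : ccont (fun q : TT => (fst q - ZtP (snd q))%C) q0) by (unfold ZtP; cct).
  assert (Cb : ccont (fun q : TT => (Cconj (fst q) - ZP (snd q))%C) q0) by (unfold ZP; cct).
  assert (Cw : ccont (fun q : TT => (RtoC (- c_ t) * cosh_dist (fst q) (snd q))%C) q0).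
  { apply ccont_mult. apply ccont_const. apply cc_cosh; auto. }
  destruct Ca as [Ca1 Ca2], Cb as [Cb1 Cb2], Cw as [Cw1 Cw2].
  split; cbv zeta; cbn [fst snd].
  - apply cR_plus; auto. apply cR_div. 2: apply cR_const. 2: lra.
    assert (0 < snd (fst q0 - ZtP (snd q0))%C ^ 2) by (apply pow_lt; lra).
    assert (0 < snd (Cconj (fst q0) - ZP (snd q0))%C ^ 2) by (replace (snd (Cconj (fst q0) - ZP (snd q0))%C ^ 2) with ((- snd (Cconj (fst q0) - ZP (snd q0))%C) ^ 2) by ring; apply pow_lt; lra).
    assert (0 <= fst (fst q0 - ZtP (snd q0))%C ^ 2) by apply pow2_ge_0.
    assert (0 <= fst (Cconj (fst q0) - ZP (snd q0))%C ^ 2) by apply pow2_ge_0.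
    apply cR_minus; apply cR_ln; try (apply cR_plus; apply cR_pow2; auto); cbv beta; apply Rplus_le_lt_0_compat; assumption.
  - apply cR_plus; auto. apply cR_plus. apply cR_minus. apply cR_const.
    apply cR_atan; apply cR_div; auto. cbv beta; apply Rgt_not_eq; exact Ha.
    apply cR_atan; apply cR_div; auto. cbv beta; apply Rlt_not_eq; exact Hb.
Qed.
End Q.

Definition Dw th (z0 w : C) := let Cc := cos ((th - PI) / 2) in let Ss := sin ((th - PI) / 2) in
  let w1 := (fst z0 - fst w)/snd w in let w2 := snd z0/snd w in (Ss*w1+Cc)^2 + Ss*Ss*(w2*w2).
Definition xiF th (z0 w : C) := let Cc := cos ((th - PI) / 2) in let Ss := sin ((th - PI) / 2) in
  let w1 := (fst z0 - fst w)/snd w in let w2 := snd z0/snd w in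
  (Cc*Ss*(w1*w1+w2*w2-1) + (Cc*Cc-Ss*Ss)*w1)/Dw th z0 w.
Definition etaF th (z0 w : C) := let Cc := cos ((th - PI) / 2) in let Ss := sin ((th - PI) / 2) in
  let w2 := snd z0/snd w in (Cc*Cc+Ss*Ss)*w2/Dw th z0 w.
Definition kap t th := let Cc := cos ((th - PI) / 2) in let Ss := sin ((th - PI) / 2) in
  (ln (Cc*Cc+Ss*Ss*((1+t)*(1+t))) - ln (Cc*Cc+Ss*Ss*((1-t)*(1-t))))/2.

Lemma Dw_pos th z0 w : 0 < snd z0 -> 0 < snd w -> 0 < Dw th z0 w.
Proof. intros Hz Hw. unfold Dw. pose proof (CS1 th) as H. cbv zeta in *.
  set (Cc := cos ((th - PI) / 2)) in *. set (Ss := sin ((th - PI) / 2)) in *.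
  set (w1 := (fst z0 - fst w)/snd w). set (w2 := snd z0/snd w).
  assert (0 < w2) by (unfold w2; apply Rdiv_lt_0_compat; lra).
  destruct (Req_dec Ss 0) as [E|E].
  - rewrite E in *. replace ((0*w1+Cc)^2 + 0*0*(w2*w2)) with (Cc*Cc) by ring. lra.
  - assert (0 < Ss*Ss) by (apply Rsqr_pos_lt in E; unfold Rsqr in E; lra).
    assert (0 < Ss*Ss*(w2*w2)) by (apply Rmult_lt_0_compat; nra).
    assert (0 <= (Ss*w1+Cc)^2) by apply pow2_ge_0. lra.
Qed.

Lemma etaF_pos th z0 w : 0 < snd z0 -> 0 < snd w -> 0 < etaF th z0 w.
Proof. intros Hz Hw. unfold etaF. pose proof (CS1 th) as H. pose proof (Dw_pos th z0 w Hz Hw).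
  cbv zeta in *. rewrite H. apply Rdiv_lt_0_compat; [|lra]. rewrite Rmult_1_l.
  apply Rdiv_lt_0_compat; lra. Qed.

Lemma sumsq_nz (a b : R) : a <> 0 -> a * a + b * b <> 0.
Proof. intros H. apply Rgt_not_eq. assert (0 < a*a) by (apply Rsqr_pos_lt in H; unfold Rsqr in H; lra). nra. Qed.

Lemma RePhi_form t th (z0 w : C) : 0 < t < 1 -> 0 < snd z0 -> 0 < snd w ->
  fst (Phi t z0 (horo (RtoC 0 - Ci * RtoC t)%C w th)) = kap t th + fz t (xiF th z0 w) (etaF th z0 w).
Proof.
  intros Ht Hz Hw. rewrite horo_s by lra.
  pose proof (Dw_pos th z0 w Hz Hw) as HD. pose proof (etaF_pos th z0 w Hz Hw) as He.
  pose proof (Dpos th (1+t) ltac:(lra)) as HD1. pose proof (Dpos th (1-t) ltac:(lra)) as HD2.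
  pose proof (CS1 th) as HCS.
  unfold Phi, fz, kap, xiF, etaF in *. unfold hA1, hA2. cbv zeta in *.
  unfold Dw in *. cbv zeta in *.
  destruct z0 as [x0 y0], w as [u v]. cbn [fst snd] in *.
  set (Cc := cos ((th - PI) / 2)) in *. set (Ss := sin ((th - PI) / 2)) in *.
  set (D := (Ss * ((x0 - u) / v) + Cc) ^ 2 + Ss * Ss * (y0 / v * (y0 / v))) in *.
  set (xi := (Cc * Ss * ((x0 - u) / v * ((x0 - u) / v) + y0 / v * (y0 / v) - 1) +
       (Cc * Cc - Ss * Ss) * ((x0 - u) / v)) / D).
  set (eta := (Cc * Cc + Ss * Ss) * (y0 / v) / D) in *.
  set (D1 := Cc * Cc + Ss * Ss * ((1 + t) * (1 + t))) in *.
  set (D2 := Cc * Cc + Ss * Ss * ((1 - t) * (1 - t))) in *.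
  assert (Hv : v <> 0) by lra. assert (Hy : y0 <> 0) by lra.
  assert (Hr : Cc*Cc+Ss*Ss <> 0) by lra.
  assert (HD1' : Cc * Cc + Ss * Ss * ((1 + t) * (1 + t)) <> 0) by (unfold D1 in HD1; lra).
  assert (HD2' : Cc * Cc + Ss * Ss * ((1 - t) * (1 - t)) <> 0) by (unfold D2 in HD2; lra).
  assert (HvD : (Ss * (x0 - u) + Cc * v) * (Ss * (x0 - u) + Cc * v) + Ss * Ss * (y0 * y0) <> 0).
  { replace ((Ss * (x0 - u) + Cc * v) * (Ss * (x0 - u) + Cc * v) + Ss * Ss * (y0 * y0)) with (v*v*D)
      by (unfold D; field; auto).
    apply Rgt_not_eq. apply Rmult_lt_0_compat; [nra | lra]. }
  assert (HK : y0 * (v * ((1 + t) * (Cc * Cc + Ss * Ss)) * (Cc * Cc + Ss * Ss * ((1 - t) * (1 - t))) +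
     v * ((1 - t) * (Cc * Cc + Ss * Ss)) * (Cc * Cc + Ss * Ss * ((1 + t) * (1 + t)))) <> 0).
  { apply Rmult_integral_contrapositive_currified; auto. rewrite HCS.
    fold D1 D2. apply Rgt_not_eq.
    assert (0 < v * ((1 + t) * 1) * D2) by (apply Rmult_lt_0_compat; [apply Rmult_lt_0_compat|]; lra).
    assert (0 < v * ((1 - t) * 1) * D1) by (apply Rmult_lt_0_compat; [apply Rmult_lt_0_compat|]; lra).
    lra. }
  match goal with |- context [ln ?A - ln ?B] =>
    assert (HA : A = v^2 * D * (xi^2 + (eta+1-t)^2) / D2);
    [ | assert (HB : B = v^2 * D * (xi^2 + (eta+1+t)^2) / D1)] end.
  { unfold ZtP, XP, YP, xi, eta, D, D1, D2. simpl. field. repeat split; auto; apply sumsq_nz; auto. }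
  { unfold ZP, XP, YP, xi, eta, D, D1, D2. simpl. field. repeat split; auto; apply sumsq_nz; auto. }
  match goal with |- context [fst (RtoC (- c_ t) * ?W)%C] =>
    assert (HW : fst (RtoC (- c_ t) * W)%C = - c_ t * (1 + (xi^2 + (eta-1)^2 - t^2)/(2*eta))) end.
  { unfold cosh_dist, XP, YP, xi, eta, D, D1, D2. simpl. field. repeat split; auto; apply sumsq_nz; auto. }
  rewrite HA, HB, HW.
  assert (HN : 0 < xi^2 + (eta+1-t)^2).
  { assert (0 < (eta+1-t)^2) by (apply pow_lt; lra). assert (0 <= xi^2) by apply pow2_ge_0. lra. }
  assert (HDd : 0 < xi^2 + (eta+1+t)^2).
  { assert (0 < (eta+1+t)^2) by (apply pow_lt; lra). assert (0 <= xi^2) by apply pow2_ge_0. lra. }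
  assert (Hv2 : 0 < v^2) by (apply pow_lt; lra).
  rewrite !ln_div by (try apply Rmult_lt_0_compat; try apply Rmult_lt_0_compat; lra).
  rewrite !ln_mult by (try apply Rmult_lt_0_compat; lra).
  lra.
Qed.

Section H.
Variables (t th x0 y0 : R).
Let Cc := cos ((th - PI) / 2).
Let Ss := sin ((th - PI) / 2).
Let A1 := hA1 th (1+t). Let A2 := hA2 th (1+t).
Let B1 := hA1 th (1-t). Let B2 := hA2 th (1-t).

Definition La u v := (x0 - u - v*B1)^2 + (y0 + v*B2)^2.
Definition Lb u v := (x0 - u - v*A1)^2 + (y0 + v*A2)^2.
Definition Hh u v := ((x0-u)^2 + y0^2)/(2*y0*v) - 1 + v/(2*y0)
  - t^2*(Ss^2*((x0-u)^2+y0^2)/v + 2*Ss*Cc*(x0-u) + Cc^2*v)/(2*(Cc^2+Ss^2)*y0).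
Definition Fe u v := (ln (La u v) - ln (Lb u v))/2 - c_ t * (1 + Hh u v).

Lemma F_Fe u v : 0 < t < 1 -> 0 < y0 -> 0 < v ->
  fst (Phi t (x0, y0) (horo (RtoC 0 - Ci * RtoC t)%C (u, v) th)) = Fe u v.
Proof.
  intros Ht Hy Hv. rewrite horo_s by lra. unfold Phi, Fe, La, Lb, Hh. cbv zeta. cbn [fst snd].
  fold A1 A2 B1 B2.
  match goal with |- context [ln ?A - ln ?B] =>
    replace A with ((x0 - u - v*B1)^2 + (y0 + v*B2)^2) by (unfold ZtP, XP, YP; simpl; field);
    replace B with ((x0 - u - v*A1)^2 + (y0 + v*A2)^2) by (unfold ZP, XP, YP; simpl; field) end.
  match goal with |- context [fst (RtoC (- c_ t) * ?W)%C] =>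
    replace (fst (RtoC (- c_ t) * W)%C) with (- c_ t * fst W) by (simpl; ring) end.
  pose proof (Dpos th (1+t) ltac:(lra)) as HD1. pose proof (Dpos th (1-t) ltac:(lra)) as HD2.
  pose proof (CS1 th) as HCS. cbv zeta in HD1, HD2, HCS. fold Cc Ss in HD1, HD2, HCS.
  assert (HK : y0 * (v * ((1 + t) * (Cc * Cc + Ss * Ss)) * (Cc * Cc + Ss * Ss * ((1 - t) * (1 - t))) +
     v * ((1 - t) * (Cc * Cc + Ss * Ss)) * (Cc * Cc + Ss * Ss * ((1 + t) * (1 + t)))) <> 0).
  { apply Rmult_integral_contrapositive_currified; [lra|]. rewrite HCS. apply Rgt_not_eq.
    assert (0 < v * ((1 + t) * 1) * (Cc * Cc + Ss * Ss * ((1 - t) * (1 - t)))) by (apply Rmult_lt_0_compat; [apply Rmult_lt_0_compat|]; lra).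
    assert (0 < v * ((1 - t) * 1) * (Cc * Cc + Ss * Ss * ((1 + t) * (1 + t)))) by (apply Rmult_lt_0_compat; [apply Rmult_lt_0_compat|]; lra).
    lra. }
  match goal with |- context [- c_ t * fst ?W] =>
    replace (fst W) with (1 + Hh u v) end.
  { unfold Hh. ring. }
  unfold cosh_dist, XP, YP, Hh, A1, A2, B1, B2, hA1, hA2. cbv zeta. fold Cc Ss. simpl.
  field. repeat split; try lra; try apply sumsq_nz; auto.
Qed.

Definition Fx u v := -(x0 - u - v*B1)/La u v + (x0 - u - v*A1)/Lb u v
  - c_ t * (-(x0-u)/(y0*v) + t^2*(Ss^2*(x0-u) + Ss*Cc*v)/((Cc^2+Ss^2)*y0*v)).
Definition Fy u v := ((x0-u-v*B1)*(-B1) + (y0+v*B2)*B2)/La u v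
  - ((x0-u-v*A1)*(-A1) + (y0+v*A2)*A2)/Lb u v
  - c_ t * (-((x0-u)^2+y0^2)/(2*y0*v^2) + 1/(2*y0) - t^2*(-Ss^2*((x0-u)^2+y0^2)/v^2 + Cc^2)/(2*(Cc^2+Ss^2)*y0)).

Lemma La_pos u v : 0 < t < 1 -> 0 < y0 -> 0 < v -> 0 < La u v.
Proof. intros Ht Hy Hv. unfold La. pose proof (hA2_pos th (1-t) ltac:(lra)). fold B2 in H.
  assert (0 < (y0 + v*B2)^2) by (apply pow_lt; nra). assert (0 <= (x0 - u - v*B1)^2) by apply pow2_ge_0. lra. Qed.
Lemma Lb_pos u v : 0 < t < 1 -> 0 < y0 -> 0 < v -> 0 < Lb u v.
Proof. intros Ht Hy Hv. unfold Lb. pose proof (hA2_pos th (1+t) ltac:(lra)). fold A2 in H.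
  assert (0 < (y0 + v*A2)^2) by (apply pow_lt; nra). assert (0 <= (x0 - u - v*A1)^2) by apply pow2_ge_0. lra. Qed.
Lemma r2_pos : 0 < Cc^2 + Ss^2.
Proof. pose proof (CS1 th) as H. cbv zeta in H. fold Cc Ss in H. simpl. lra. Qed.

Ltac sidetac u v := match goal with
  | |- 0 < ?E => first [replace E with (La u v) by (unfold La; ring) | replace E with (Lb u v) by (unfold Lb; ring)]; assumption
  | |- ?E <> 0 => apply Rgt_not_eq; first [replace E with (La u v) by (unfold La; ring) | replace E with (Lb u v) by (unfold Lb; ring)]; assumption
  end.

Ltac alltac u v := repeat split; try exact I; try lra; try (apply Rgt_not_eq; lra);
  try (apply Rgt_not_eq; apply pow_lt; lra);
  try (apply Rgt_not_eq; repeat apply Rmult_lt_0_compat; lra); try sidetac u v;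
  match goal with |- ?G => idtac "REMAIN" G end.

Lemma dFx u v : 0 < t < 1 -> 0 < y0 -> 0 < v -> is_derive (fun a => Fe a v) u (Fx u v).
Proof. intros Ht Hy Hv. pose proof (La_pos u v Ht Hy Hv). pose proof (Lb_pos u v Ht Hy Hv).
  pose proof r2_pos. unfold Fe, Hh, Fx. unfold La, Lb. auto_derive.
  - alltac u v.
  - field. alltac u v.
Qed.
Lemma dFy u v : 0 < t < 1 -> 0 < y0 -> 0 < v -> is_derive (fun b => Fe u b) v (Fy u v).
Proof. intros Ht Hy Hv. pose proof (La_pos u v Ht Hy Hv). pose proof (Lb_pos u v Ht Hy Hv).
  pose proof r2_pos. unfold Fe, Hh, Fy. unfold La, Lb. auto_derive.
  - alltac u v.
  - field. alltac u v.
Qed.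

Lemma sumsq_nz2 (a b : R) : b <> 0 -> a * a + b * b <> 0.
Proof. intros H. apply Rgt_not_eq. assert (0 < b*b) by (apply Rsqr_pos_lt in H; unfold Rsqr in H; lra). nra. Qed.

Ltac hside := 
  let HD1 := fresh in let HD2 := fresh in let HCS := fresh in
  pose proof (Dpos th (1+t) ltac:(lra)) as HD1; pose proof (Dpos th (1-t) ltac:(lra)) as HD2;
  pose proof (CS1 th) as HCS; cbv zeta in HD1, HD2, HCS; fold Cc Ss in HD1, HD2, HCS;
  assert (0 < 4 - t^2) by nra;
  assert (0 < 4*t - t^3) by (replace (4*t - t^3) with (t*(4-t^2)) by ring; apply Rmult_lt_0_compat; lra);
  pose proof r2_pos;
  repeat split; try (apply Rgt_not_eq; lra); try lra;
  try (apply sumsq_nz2; rewrite HCS; apply Rgt_not_eq; apply Rplus_lt_0_compat; apply Rmult_lt_0_compat; lra);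
  match goal with |- ?G => idtac "REMAIN" G end.

Definition cpsi := (Cc^2 - Ss^2)/(Cc^2+Ss^2).
Definition spsi := 2*Cc*Ss/(Cc^2+Ss^2).
Definition aa := 8*t/(4-t^2)^2 - c_ t.
Definition bb := -8*t/(4-t^2)^2 - c_ t*(1-t^2).
Definition Vxx := (aa*cpsi^2 + bb*spsi^2)/y0^2.
Definition Vyy := (aa*spsi^2 + bb*cpsi^2)/y0^2.
Definition Vxy := (aa-bb)*cpsi*spsi/y0^2.

Lemma d2xx : 0 < t < 1 -> 0 < y0 -> is_derive (fun a => Fx a y0) x0 Vxx.
Proof. intros Ht Hy. pose proof (La_pos x0 y0 Ht Hy Hy). pose proof (Lb_pos x0 y0 Ht Hy Hy).
  pose proof r2_pos. unfold Fx. unfold La, Lb. auto_derive.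
  - alltac x0 y0.
  - replace (x0 - x0) with 0 by ring.
    unfold Vxx, cpsi, spsi, aa, bb, A1, A2, B1, B2, hA1, hA2, c_. cbv zeta. fold Cc Ss.
    field. hside.
Qed.

Lemma d2xy : 0 < t < 1 -> 0 < y0 -> is_derive (fun b => Fx x0 b) y0 Vxy.
Proof. intros Ht Hy. pose proof (La_pos x0 y0 Ht Hy Hy). pose proof (Lb_pos x0 y0 Ht Hy Hy).
  pose proof r2_pos. unfold Fx. unfold La, Lb. auto_derive.
  - alltac x0 y0.
  - replace (x0 - x0) with 0 by ring.
    unfold Vxy, cpsi, spsi, aa, bb, A1, A2, B1, B2, hA1, hA2, c_. cbv zeta. fold Cc Ss.
    field. hside.
Qed.

Lemma d2yx : 0 < t < 1 -> 0 < y0 -> is_derive (fun a => Fy a y0) x0 Vxy.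
Proof. intros Ht Hy. pose proof (La_pos x0 y0 Ht Hy Hy). pose proof (Lb_pos x0 y0 Ht Hy Hy).
  pose proof r2_pos. unfold Fy. unfold La, Lb. auto_derive.
  - alltac x0 y0.
  - replace (x0 - x0) with 0 by ring.
    unfold Vxy, cpsi, spsi, aa, bb, A1, A2, B1, B2, hA1, hA2, c_. cbv zeta. fold Cc Ss.
    field. hside.
Qed.

Lemma d2yy : 0 < t < 1 -> 0 < y0 -> is_derive (fun b => Fy x0 b) y0 Vyy.
Proof. intros Ht Hy. pose proof (La_pos x0 y0 Ht Hy Hy). pose proof (Lb_pos x0 y0 Ht Hy Hy).
  pose proof r2_pos. unfold Fy. unfold La, Lb. auto_derive.
  - alltac x0 y0.
  - replace (x0 - x0) with 0 by ring.
    unfold Vyy, cpsi, spsi, aa, bb, A1, A2, B1, B2, hA1, hA2, c_. cbv zeta. fold Cc Ss.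
    field. hside.
Qed.
End H.

Lemma det_nz t th y0 : 0 < t < 1 -> 0 < y0 ->
  Vxx t th y0 * Vyy t th y0 - Vxy t th y0 * Vxy t th y0 <> 0.
Proof. intros Ht Hy.
  pose proof (r2_pos th) as Hr. cbv zeta in Hr.
  assert (H4 : 0 < 4 - t^2) by nra.
  assert (H4t : 0 < 4*t - t^3) by (replace (4*t - t^3) with (t*(4-t^2)) by ring; apply Rmult_lt_0_compat; lra).
  replace (Vxx t th y0 * Vyy t th y0 - Vxy t th y0 * Vxy t th y0) with (aa t * bb t / y0^4).
  2:{ unfold Vxx, Vyy, Vxy, cpsi, spsi. cbv zeta. field. split; lra. }
  assert (Ha : aa t < 0).
  { unfold aa, c_. replace (8 * t / (4 - t ^ 2) ^ 2 - 4 / (4 * t - t ^ 3)) with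
      (-((16 - 12*t^2)/(t*(4-t^2)^2))) by (field; repeat split; lra).
    assert (0 < (16 - 12*t^2)/(t*(4-t^2)^2)).
    { apply Rdiv_lt_0_compat. nra. apply Rmult_lt_0_compat; [lra| apply pow_lt; lra]. }
    lra. }
  assert (Hb : bb t < 0).
  { unfold bb, c_. assert (0 < 8*t/(4-t^2)^2) by (apply Rdiv_lt_0_compat; [lra| apply pow_lt; lra]).
    assert (0 < 4/(4*t - t^3)) by (apply Rdiv_lt_0_compat; lra).
    assert (0 < 4/(4*t - t^3)*(1-t^2)) by (apply Rmult_lt_0_compat; nra). lra. }
  apply Rgt_not_eq. apply Rdiv_lt_0_compat. nra. apply pow_lt; lra.
Qed.

Lemma hess t th (x0 y0 : R) : 0 < t < 1 -> 0 < y0 ->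
  hessian_nondegenerate (fun x y => Re (Phi t (x0,y0) (horo (RtoC 0 - Ci * RtoC t)%C (x, y) th))) x0 y0.
Proof.
  intros Ht Hy.
  set (f := fun x y => Re (Phi t (x0,y0) (horo (RtoC 0 - Ci * RtoC t)%C (x, y) th))).
  assert (Hf : forall u v, 0 < v -> Fe t th x0 y0 u v = f u v).
  { intros u v Hv. unfold f, Re. rewrite F_Fe by lra. reflexivity. }
  assert (Hloc : forall b, 0 < b -> locally b (fun v => 0 < v)).
  { intros b Hb. apply (open_gt 0 b Hb). }
  assert (Dx : forall u v, 0 < v -> is_derive (fun a => f a v) u (Fx t th x0 y0 u v)).
  { intros u v Hv. apply (is_derive_ext (fun a => Fe t th x0 y0 a v)). intro a. apply Hf; auto.
    apply dFx; auto. }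
  assert (Dy : forall u v, 0 < v -> is_derive (fun b => f u b) v (Fy t th x0 y0 u v)).
  { intros u v Hv. apply (is_derive_ext_loc (fun b => Fe t th x0 y0 u b)).
    apply (filter_imp (fun b => 0 < b)). intros b Hb. apply Hf; auto. apply Hloc; auto.
    apply dFy; auto. }
  assert (Ex : forall a, dx f a y0 = Fx t th x0 y0 a y0).
  { intro a. unfold dx. apply is_derive_unique. apply Dx; auto. }
  assert (Ey : forall a, dy f a y0 = Fy t th x0 y0 a y0).
  { intro a. unfold dy. apply is_derive_unique. apply Dy; auto. }
  assert (Ex' : locally y0 (fun b => Fx t th x0 y0 x0 b = dx f x0 b)).
  { apply (filter_imp (fun b => 0 < b)). intros b Hb. unfold dx. symmetry. apply is_derive_unique. apply Dx; auto.
    apply Hloc; auto. }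
  assert (Ey' : locally y0 (fun b => Fy t th x0 y0 x0 b = dy f x0 b)).
  { apply (filter_imp (fun b => 0 < b)). intros b Hb. unfold dy. symmetry. apply is_derive_unique. apply Dy; auto.
    apply Hloc; auto. }
  assert (Sxx : is_derive (fun a => dx f a y0) x0 (Vxx t th y0)).
  { apply (is_derive_ext (fun a => Fx t th x0 y0 a y0)). intro a. rewrite Ex. reflexivity. apply d2xx; auto. }
  assert (Syx : is_derive (fun a => dy f a y0) x0 (Vxy t th y0)).
  { apply (is_derive_ext (fun a => Fy t th x0 y0 a y0)). intro a. rewrite Ey. reflexivity. apply d2yx; auto. }
  assert (Sxy : is_derive (fun b => dx f x0 b) y0 (Vxy t th y0)).
  { apply (is_derive_ext_loc (fun b => Fx t th x0 y0 x0 b)). exact Ex'. apply d2xy; auto. }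
  assert (Syy : is_derive (fun b => dy f x0 b) y0 (Vyy t th y0)).
  { apply (is_derive_ext_loc (fun b => Fy t th x0 y0 x0 b)). exact Ey'. apply d2yy; auto. }
  unfold hessian_nondegenerate. split; [|split; [|split; [|split; [|split]]]].
  - exists (y0/2). split. lra. intros u v Hu Hv.
    assert (0 < v) by (apply Rabs_def2 in Hv; lra).
    split. eexists; apply Dx; auto. eexists; apply Dy; auto.
  - eexists; exact Sxx.
  - eexists; exact Sxy.
  - eexists; exact Syx.
  - eexists; exact Syy.
  - replace (Derive (fun a => dx f a y0) x0) with (Vxx t th y0) by (symmetry; apply is_derive_unique; exact Sxx).
    replace (Derive (fun b => dx f x0 b) y0) with (Vxy t th y0) by (symmetry; apply is_derive_unique; exact Sxy).
    replace (Derive (fun a => dy f a y0) x0) with (Vxy t th y0) by (symmetry; apply is_derive_unique; exact Syx).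
    replace (Derive (fun b => dy f x0 b) y0) with (Vyy t th y0) by (symmetry; apply is_derive_unique; exact Syy).
    apply det_nz; auto.
Qed.

Lemma Cmod_Cexp u : Cmod (Cexp u) = exp (Re u).
Proof. unfold Cmod, Cexp. cbn [fst snd].
  replace ((exp (Re u) * cos (Im u)) ^ 2 + (exp (Re u) * sin (Im u)) ^ 2) with ((exp (Re u))²).
  - apply sqrt_Rsqr. apply Rlt_le, exp_pos.
  - pose proof (sin2_cos2 (Im u)). unfold Rsqr in *. nra.
Qed.

Lemma xi_eta_self th (z0 : C) : 0 < snd z0 -> xiF th z0 z0 = 0 /\ etaF th z0 z0 = 1.
Proof. intros Hz. pose proof (CS1 th) as H. cbv zeta in H.
  unfold xiF, etaF, Dw. cbv zeta.
  set (Cc := cos ((th - PI) / 2)) in *. set (Ss := sin ((th - PI) / 2)) in *.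
  replace (fst z0 - fst z0) with 0 by ring. replace (snd z0 / snd z0) with 1 by (field; lra).
  assert (HD : (Ss * (0 / snd z0) + Cc) ^ 2 + Ss * Ss * (1 * 1) = Cc*Cc + Ss*Ss) by (field; lra).
  rewrite HD, H. split; field; lra.
Qed.

Theorem lemma1 (t : R) (ht : 0 < t < 1) :
  exists Phi : C -> C * C -> C,
    (forall z P, inH z -> G1 P ->
       Cexp (Phi z P) = Kt t z P /\
       filterlim (fun q : C * (C * C) => Phi (fst q) (snd q))
         (within (fun q : C * (C * C) => inH (fst q) /\ G1 (snd q)) (locally (z, P)))
         (locally (Phi z P))) /\
    (forall (z : C) (theta : R), inH z ->
       forall P, Sigma t theta P ->
         Cmod (Kt t z P) <= Cmod (Kt t z (horo (RtoC 0 - Ci * RtoC t)%C z theta))) /\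
    (forall (z0 : C) (theta : R), inH z0 ->
       hessian_nondegenerate
         (fun x y => Re (Phi z0 (horo (RtoC 0 - Ci * RtoC t)%C (x, y) theta)))
         (Re z0) (Im z0)).
Proof.
  exists (Phi t). split; [|split].
  - intros z P Hz HG. destruct HG as [s [w [th [Hs [Hw HP]]]]]. subst P.
    unfold inH, Im in Hz, Hw.
    destruct (signs s w z th Hs Hz Hw) as [Ha [Hb HY]].
    split.
    + apply Phi_exp; auto.
    + eapply filterlim_filter_le_1. apply filter_le_within.
      exact (Phi_cont t (z, horo (RtoC 0 - Ci * RtoC s)%C w th) Ha Hb ltac:(unfold Im; cbn [fst]; lra) ltac:(cbn [snd]; lra)).
  - intros z th Hz P [w [Hw HP]]. subst P. unfold inH, Im in Hz, Hw.
    destruct (signs t w z th ltac:(lra) Hz Hw) as [Ha [Hb _]].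
    destruct (signs t z z th ltac:(lra) Hz Hz) as [Ha' [Hb' _]].
    rewrite <- (Phi_exp t z _ Ha Hb), <- (Phi_exp t z _ Ha' Hb').
    rewrite !Cmod_Cexp. unfold Re.
    rewrite !RePhi_form by auto.
    destruct (xi_eta_self th z Hz) as [E1 E2]. rewrite E1, E2.
    pose proof (fz_max t (xiF th z w) (etaF th z w) ht (etaF_pos th z w Hz Hw)).
    destruct (Rle_lt_or_eq_dec _ _ H) as [Hlt|Heq].
    + apply Rlt_le, exp_increasing. lra.
    + rewrite Heq. lra.
  - intros z0 th Hz0. destruct z0 as [x0 y0]. unfold inH, Im in Hz0. cbn [snd] in Hz0.
    exact (hess t th x0 y0 ht Hz0).
Qed.
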